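(* Let $X$ and $Y$ be $\emptyset$-hyperdefinable sets with $X\perp_\emptyset Y$. Let $A\subseteq X^{heq}\cup Y^{heq}$, and let $X'\subseteq X^{heq}$ and $Y'\subseteq Y^{heq}$ be hyperdefinable over $A$. Then $X'\perp_A Y'$.
   Context: Work in a $\kappa$-saturated, strongly $\kappa$-homogeneous monster model $\mathfrak M$ for a very large $\kappa$; ''bounded'' means of cardinality $<\kappa$. A countable equivalence relation over $A$ is an equivalence relation given by a conjunction of countably many formulas over $A$ (in countably many variables). A hyperimaginary of type $E$ is the class $a_E$ of a tuple $a$ modulo a countable equivalence relation $E$ over $\emptyset$; tuples (possibly infinite) of hyperimaginaries are allowed, and all tuples and parameter sets are hyperimaginary unless otherwise stated. A hyperimaginary $e$ is definable (resp. bounded) over a set $B$ of hyperimaginaries if every automorphism of $\mathfrak M$ fixing $B$ pointwise fixes $e$ (resp. the orbit of $e$ under such automorphisms is bounded); $\mathrm{dcl}^{heq}(B)$ and $\mathrm{bdd}(B)$ denote the sets of hyperimaginaries definable, resp. bounded, over $B$. Two tuples of hyperimaginaries have the same type over $B$ iff they are conjugate by an automorphism fixing $B$ pointwise. A set $X$ is hyperdefinable over $A$ if $X=Z/E$ where $Z$ is type-definable over $A$ in countably many variables and $E$ is a countable equivalence relation on $Z$ over $A$. For $X$ hyperdefinable over $\emptyset$, $X^{heq}$ is the set of hyperimaginaries in $\mathrm{dcl}^{heq}(x)$ for tuples $x$ from $X$. $X\perp_A Y$ (orthogonality over $A$) means: for all tuples $a$ from $X$ and $b$ from $Y$, $\mathrm{tp}(a/A)\cup\mathrm{tp}(b/A)\vdash\mathrm{tp}(ab/A)$.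 *)

(* Defs.v *)
From Stdlib Require Import List Arith Bool.
From Stdlib Require Vectors.Fin.

Set Implicit Arguments.

Record Language := {
  Func : Type; farity : Func -> nat;
  Rel : Type;  rarity : Rel -> nat }.

Record Structure (L : Language) := {
  carrier :> Type;
  fun_i : forall f : Func L, (Fin.t (farity L f) -> carrier) -> carrier;
  rel_i : forall r : Rel L, (Fin.t (rarity L r) -> carrier) -> Prop }.

Definition lt_card (S K : Type) : Prop :=
  (exists f : S -> K, forall x y, f x = f y -> x = y) /\
  ~ (exists g : K -> S, forall x y, g x = g y -> x = y).

Section Model.
Context {L : Language} {M : Structure L}.

Inductive term : Type :=
| tvar (n : nat)
| tpar (m : M)
| tapp (f : Func L) (args : Fin.t (farity L f) -> term).

Inductive formula : Type :=
| fEq (t s : term)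
| fRel (r : Rel L) (args : Fin.t (rarity L r) -> term)
| fNeg (phi : formula)
| fAnd (phi psi : formula)
| fEx (n : nat) (phi : formula).

Definition upd (v : nat -> M) (n : nat) (m : M) : nat -> M :=
  fun k => if Nat.eqb k n then m else v k.

Fixpoint eval (v : nat -> M) (t : term) : M :=
  match t with
  | tvar n => v n
  | tpar m => m
  | tapp f args => fun_i M f (fun i => eval v (args i))
  end.

Fixpoint sat (v : nat -> M) (phi : formula) : Prop :=
  match phi with
  | fEq t s => eval v t = eval v s
  | fRel r args => rel_i M r (fun i => eval v (args i))
  | fNeg p => ~ sat v p
  | fAnd p q => sat v p /\ sat v q
  | fEx n p => exists m, sat (upd v n m) p
  end.

Fixpoint term_params (t : term) (m : M) : Prop :=
  match t with
  | tvar _ => False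
  | tpar p => p = m
  | tapp f args => exists i, term_params (args i) m
  end.

Fixpoint params (phi : formula) (m : M) : Prop :=
  match phi with
  | fEq t s => term_params t m \/ term_params s m
  | fRel r args => exists i, term_params (args i) m
  | fNeg p => params p m
  | fAnd p q => params p m \/ params q m
  | fEx _ p => params p m
  end.

Fixpoint map_term (g : M -> M) (t : term) : term :=
  match t with
  | tvar n => tvar n
  | tpar p => tpar (g p)
  | tapp f args => tapp f (fun i => map_term g (args i))
  end.

Fixpoint map_params (g : M -> M) (phi : formula) : formula :=
  match phi with
  | fEq t s => fEq (map_term g t) (map_term g s)
  | fRel r args => fRel r (fun i => map_term g (args i))
  | fNeg p => fNeg (map_params g p)
  | fAnd p q => fAnd (map_params g p) (map_params g q)
  | fEx n p => fEx n (map_params g p)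
  end.

Definition param_free (phi : formula) : Prop := forall m, ~ params phi m.

Definition pairv (x y : nat -> M) : nat -> M :=
  fun n => if Nat.even n then x (Nat.div2 n) else y (Nat.div2 n).

Definition is_aut (s : M -> M) : Prop :=
  (exists t : M -> M, (forall m, s (t m) = m) /\ (forall m, t (s m) = m)) /\
  (forall f args, s (fun_i M f args) = fun_i M f (fun i => s (args i))) /\
  (forall r args, rel_i M r args <-> rel_i M r (fun i => s (args i))).

Section Kappa.
Variable K : Type.  (* a type of cardinality kappa *)

Definition small (P : M -> Prop) : Prop := lt_card {m : M | P m} K.

Definition saturated : Prop :=
  forall (P : M -> Prop), small P ->
  forall (Sigma : formula -> Prop),
    (forall phi, Sigma phi -> forall m, params phi m -> P m) ->
    (forall l : list formula, (forall phi, In phi l -> Sigma phi) ->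
        exists v, forall phi, In phi l -> sat v phi) ->
    exists v, forall phi, Sigma phi -> sat v phi.

Definition elementary_on (P : M -> Prop) (g : M -> M) : Prop :=
  forall phi, (forall m, params phi m -> P m) ->
    ((forall v, sat v phi) <-> (forall v, sat v (map_params g phi))).

Definition strongly_homogeneous : Prop :=
  forall (P : M -> Prop), small P -> forall g : M -> M, elementary_on P g ->
    exists s, is_aut s /\ forall m, P m -> s m = g m.

Definition regular_card : Prop :=
  forall (I : Type) (S : I -> Type), lt_card I K ->
    (forall i, lt_card (S i) K) -> lt_card {i : I & S i} K.

Definition monster : Prop :=
  lt_card nat K /\ lt_card (Func L + Rel L) K /\ regular_card /\
  saturated /\ strongly_homogeneous.

Definition trel := (nat -> M) -> (nat -> M) -> Prop.

(* class of hrep modulo hrel *)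
Record Himag := mkH { hrel : trel; hrep : nat -> M }.

Definition act (s : M -> M) (h : Himag) : Himag :=
  mkH (hrel h) (fun n => s (hrep h n)).

Definition heq (h1 h2 : Himag) : Prop :=
  hrel h1 = hrel h2 /\ hrel h1 (hrep h1) (hrep h2).

Definition fixes (s : M -> M) (h : Himag) : Prop := heq (act s h) h.

Definition countable_rel0 (E : trel) : Prop :=
  exists phis : nat -> formula, (forall n, param_free (phis n)) /\
    forall x y, E x y <-> forall n, sat (pairv x y) (phis n).

Definition equiv_on (Z : (nat -> M) -> Prop) (E : trel) : Prop :=
  (forall x, Z x -> E x x) /\
  (forall x y, Z x -> Z y -> E x y -> E y x) /\
  (forall x y z, Z x -> Z y -> Z z -> E x y -> E y z -> E x z).

Definition is_himag (h : Himag) : Prop :=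
  countable_rel0 (hrel h) /\ equiv_on (fun _ => True) (hrel h).

Record HTuple := { idx : Type; elt : idx -> Himag }.

Definition fixes_tuple (s : M -> M) (B : HTuple) : Prop :=
  forall i, fixes s (elt B i).

Definition same_type (B : HTuple) {I : Type} (a a' : I -> Himag) : Prop :=
  exists s, is_aut s /\ fixes_tuple s B /\ forall i, heq (act s (a i)) (a' i).

Definition definable_over (B : HTuple) (e : Himag) : Prop :=
  forall s, is_aut s -> fixes_tuple s B -> fixes s e.

Definition join {I J : Type} (a : I -> Himag) (b : J -> Himag) : I + J -> Himag :=
  fun k => match k with inl i => a i | inr j => b j end.

Definition empty_tuple : HTuple := {| idx := Empty_set; elt := fun e => match e with end |}.

Definition typedef0 (Z : (nat -> M) -> Prop) : Prop :=
  exists Sigma : formula -> Prop, (forall phi, Sigma phi -> param_free phi) /\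
    forall x, Z x <-> forall phi, Sigma phi -> sat x phi.

(* type-definable over a (small) set A of hyperimaginaries: type-definable
   with (small) real parameters and Aut(M/A)-invariant *)
Definition typedef_over (A : HTuple) (Z : (nat -> M) -> Prop) : Prop :=
  (exists P : M -> Prop, small P /\ exists Sigma : formula -> Prop,
     (forall phi, Sigma phi -> forall m, params phi m -> P m) /\
     forall x, Z x <-> forall phi, Sigma phi -> sat x phi) /\
  (forall s, is_aut s -> fixes_tuple s A ->
     forall x, Z x -> Z (fun n => s (x n))).

Definition countable_rel_over (A : HTuple) (E : trel) : Prop :=
  (exists phis : nat -> formula,
     forall x y, E x y <-> forall n, sat (pairv x y) (phis n)) /\
  (forall s, is_aut s -> fixes_tuple s A ->
     forall x y, E x y -> E (fun n => s (x n)) (fun n => s (y n))).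

Record HDef := { HZ : (nat -> M) -> Prop; HE : trel }.

Definition hyperdef0 (X : HDef) : Prop :=
  typedef0 (HZ X) /\ countable_rel0 (HE X) /\ equiv_on (HZ X) (HE X).

(* the elements of X = Z/E : E-classes of elements of Z *)
Definition in_X (X : HDef) (h : Himag) : Prop :=
  hrel h = HE X /\ HZ X (hrep h).

Definition heq_of (X : HDef) (e : Himag) : Prop :=
  is_himag e /\ exists (I : Type) (x : I -> Himag),
    lt_card I K /\ (forall i, in_X X (x i)) /\
    definable_over {| idx := I; elt := x |} e.

(* a set X' of hyperimaginaries is hyperdefinable over A: it is identified,
   Aut(M/A)-equivariantly, with Z'/E' for Z' type-definable over A and E' a
   countable equivalence relation on Z' over A *)
Definition hyperdef_over (A : HTuple) (X' : Himag -> Prop) : Prop :=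
  exists (Z' : (nat -> M) -> Prop) (E' : trel) (pi : (nat -> M) -> Himag),
    typedef_over A Z' /\ countable_rel_over A E' /\ equiv_on Z' E' /\
    (forall a, Z' a -> X' (pi a)) /\
    (forall h, X' h -> exists a, Z' a /\ heq (pi a) h) /\
    (forall a b, Z' a -> Z' b -> (heq (pi a) (pi b) <-> E' a b)) /\
    (forall s, is_aut s -> fixes_tuple s A ->
       forall a, Z' a -> heq (act s (pi a)) (pi (fun n => s (a n)))).

Definition orth (B : HTuple) (Xs Ys : Himag -> Prop) : Prop :=
  forall (I J : Type) (a : I -> Himag) (b : J -> Himag),
    lt_card I K -> lt_card J K ->
    (forall i, Xs (a i)) -> (forall j, Ys (b j)) ->
    forall (a' : I -> Himag) (b' : J -> Himag),
      same_type B a a' -> same_type B b b' ->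
      same_type B (join a b) (join a' b').

End Kappa.
End Model.

(* Main.v *)
Require Import Defs.
From Stdlib Require Import List Arith Bool.
From Stdlib Require Vectors.Fin.
From Stdlib Require Import FunctionalExtensionality ClassicalEpsilon ProofIrrelevance Eqdep_dec.

Section S.
Context {L : Language} {M : Structure L}.

Lemma eval_aut (s : M -> M) (v : nat -> M) (t : @term L M) :
  is_aut s -> (forall m, ~ term_params t m) ->
  eval (fun n => s (v n)) t = s (eval v t).
Proof.
  intros Hs; induction t; simpl; intros Hp.
  - reflexivity.
  - exfalso; eapply Hp; reflexivity.
  - destruct Hs as [_ [Hf _]]. rewrite Hf. f_equal.
    apply functional_extensionality; intro i. apply H.
    intros m Hm; apply (Hp m); exists i; exact Hm.
Qed.

Lemma sat_aut (s : M -> M) : is_aut s -> forall (phi : @formula L M) v,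
  param_free phi -> (sat (fun n => s (v n)) phi <-> sat v phi).
Proof.
  intros Hs. pose proof Hs as [[t [Hst Hts]] [Hf Hr]].
  induction phi; intros v Hp; simpl.
  - rewrite !eval_aut by (auto; intros m Hm; apply (Hp m); simpl; auto).
    split; intro H; [ rewrite <- (Hts (eval v t0)), <- (Hts (eval v s0)), H; reflexivity | rewrite H; reflexivity].
  - assert (E : (fun i => eval (fun n => s (v n)) (args i)) = (fun i => s (eval v (args i)))).
    { apply functional_extensionality; intro i. apply eval_aut; auto.
      intros m Hm; apply (Hp m); simpl; exists i; exact Hm. }
    rewrite E. split; apply Hr.
  - rewrite IHphi; [tauto|]. intros m Hm; apply (Hp m); exact Hm.
  - rewrite IHphi1, IHphi2; [tauto| |]; intros m Hm; apply (Hp m); simpl; auto.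
  - assert (Hp' : param_free phi) by (intros m Hm; apply (Hp m); exact Hm).
    split; intros [m Hm].
    + exists (t m). apply (proj1 (IHphi (upd v n (t m)) Hp')).
      replace (fun k => s (upd v n (t m) k)) with (upd (fun n0 => s (v n0)) n m); auto.
      apply functional_extensionality; intro k; unfold upd; destruct (Nat.eqb k n); auto.
    + exists (s m).
      replace (upd (fun n0 => s (v n0)) n (s m)) with (fun k => s (upd v n m k)).
      * apply IHphi; auto.
      * apply functional_extensionality; intro k; unfold upd; destruct (Nat.eqb k n); auto.
Qed.

Lemma rel0_aut (s : M -> M) (E : @trel L M) : is_aut s -> countable_rel0 E ->
  forall x y, E x y -> E (fun n => s (x n)) (fun n => s (y n)).
Proof.
  intros Hs [phis [Hpf HE]] x y Hxy. rewrite HE in *. intro n.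
  replace (pairv (fun n0 => s (x n0)) (fun n0 => s (y n0))) with (fun k => s (pairv x y k)).
  - apply sat_aut; auto.
  - apply functional_extensionality; intro k; unfold pairv; destruct (Nat.even k); auto.
Qed.

Lemma aut_inv (s : M -> M) : is_aut s ->
  exists t, is_aut t /\ (forall m, s (t m) = m) /\ (forall m, t (s m) = m).
Proof.
  intros Hs. pose proof Hs as [[t [Hst Hts]] [Hf Hr]].
  exists t; split; auto. split; [exists s; auto|]. split.
  - intros f args. rewrite <- (Hts (fun_i M f (fun i => t (args i)))). rewrite Hf.
    f_equal. f_equal. apply functional_extensionality; intro i; auto.
  - intros r args. rewrite (Hr r (fun i => t (args i))).
    replace (fun i => s (t (args i))) with args; [tauto|].
    apply functional_extensionality; intro i; auto.
Qed.

Lemma aut_comp (s t : M -> M) : is_aut s -> is_aut t -> is_aut (fun m => s (t m)).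
Proof.
  intros [[s' [H1 H2]] [Hf Hr]] [[t' [H3 H4]] [Hf' Hr']].
  split; [exists (fun m => t' (s' m)); split; intro m; congruence|]. split.
  - intros f args. rewrite Hf', Hf. reflexivity.
  - intros r args. rewrite (Hr' r args), (Hr r). tauto.
Qed.

Lemma heq_trans (h1 h2 h3 : @Himag L M) : equiv_on (fun _ => True) (hrel h1) ->
  heq h1 h2 -> heq h2 h3 -> heq h1 h3.
Proof.
  intros [_ [_ Ht]] [e12 r12] [e23 r23]. split; [congruence|].
  rewrite <- e12 in r23. eapply Ht; eauto.
Qed.

Variable K : Type.

Lemma helper (X : @HDef L M) (HXd : hyperdef0 X) (rho sig : M -> M)
  (Hr : is_aut rho) (Hs : is_aut sig) (I : Type) (x : I -> Himag)
  (Hx : forall i, in_X X (x i)) (e : Himag) (He : is_himag e)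
  (Hd : definable_over {| idx := I; elt := x |} e)
  (Hxi : forall i, heq (act rho (x i)) (act sig (x i))) :
  heq (act rho e) (act sig e).
Proof.
  destruct (aut_inv _ Hs) as [t [Ht [Hst Hts]]].
  assert (Hmu : is_aut (fun m => t (rho m))) by (apply aut_comp; auto).
  assert (Hfix : fixes (fun m => t (rho m)) e).
  { apply Hd; auto. intro i. simpl. split; [reflexivity|]. simpl.
    destruct (Hx i) as [Hrel _].
    destruct (Hxi i) as [_ Hi]. simpl in Hi.
    destruct HXd as [_ [Hc0 _]]. rewrite Hrel in Hi |- *.
    pose proof (rel0_aut _ _ Ht Hc0 _ _ Hi) as H. simpl in H.
    replace (fun n => t (sig (hrep (x i) n))) with (hrep (x i)) in H; auto.
    apply functional_extensionality; intro n; auto. }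
  destruct Hfix as [_ Hf]. simpl in Hf.
  split; [reflexivity|]. simpl.
  pose proof (rel0_aut _ _ Hs (proj1 He) _ _ Hf) as H. simpl in H.
  replace (fun n => sig (t (rho (hrep e n)))) with (fun n => rho (hrep e n)) in H; auto.
  apply functional_extensionality; intro n; auto.
Qed.

Lemma lt_card_inj (T S : Type) (f : T -> S) : (forall x y, f x = f y -> x = y) ->
  lt_card S K -> lt_card T K.
Proof.
  intros Hf [[g Hg] Hn]. split.
  - exists (fun x => g (f x)). intros x y H; apply Hf, Hg, H.
  - intros [h Hh]. apply Hn. exists (fun k => f (h k)). intros x y H; apply Hh, Hf, H.
Qed.

Lemma lt_card_sub (T : Type) (P : T -> Prop) : lt_card T K -> lt_card {x | P x} K.
Proof.
  apply lt_card_inj with (f := @proj1_sig _ _).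
  intros [x px] [y py]; simpl; intro; subst. f_equal; apply proof_irrelevance.
Qed.

Lemma lt_card_sum (I J : Type) : lt_card nat K -> regular_card K ->
  lt_card I K -> lt_card J K -> lt_card (I + J) K.
Proof.
  intros Hn Hreg HI HJ.
  assert (Hb : lt_card bool K).
  { apply lt_card_inj with (f := fun b : bool => if b then 1 else 0); auto.
    intros [] []; simpl; congruence. }
  assert (Hs := Hreg bool (fun b => if b then I else J) Hb (fun b => match b with true => HI | false => HJ end)).
  apply lt_card_inj with (f := fun z => match z with
     | inl i => existT (fun b : bool => if b then I else J) true i
     | inr j => existT (fun b : bool => if b then I else J) false j end); auto.
  intros [i|j] [i'|j'] H.
  - f_equal. exact (inj_pair2_eq_dec _ bool_dec _ _ _ _ H).
  - discriminate (f_equal (@projT1 _ _) H).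
  - discriminate (f_equal (@projT1 _ _) H).
  - f_equal. exact (inj_pair2_eq_dec _ bool_dec _ _ _ _ H).
Qed.

Definition Wit (X : @HDef L M) (e : Himag) :=
  {I : Type & {x : I -> Himag | lt_card I K /\ (forall i, in_X X (x i)) /\
     definable_over {| idx := I; elt := x |} e}}.

Lemma get_wit X e : heq_of K X e -> Wit X e.
Proof.
  intros [_ Hex]. destruct (constructive_indefinite_description _ Hex) as [I HI].
  exists I. apply constructive_indefinite_description. exact HI.
Qed.

Lemma orth_heq (HM : @monster L M K) (X Y : @HDef L M) (HXd : hyperdef0 X) (HYd : hyperdef0 Y)
  (Horth : orth K empty_tuple (in_X X) (in_X Y))
  (Ic Id : Type) (c c' : Ic -> Himag) (d d' : Id -> Himag)
  (Hc : lt_card Ic K) (Hd : lt_card Id K)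
  (Hcx : forall k, heq_of K X (c k)) (Hdy : forall k, heq_of K Y (d k))
  (sig tau : M -> M) (Hs : is_aut sig) (Ht : is_aut tau)
  (Hsc : forall k, heq (act sig (c k)) (c' k))
  (Htd : forall k, heq (act tau (d k)) (d' k)) :
  exists rho, is_aut rho /\ (forall k, heq (act rho (c k)) (c' k)) /\
    (forall k, heq (act rho (d k)) (d' k)).
Proof.
  destruct HM as [Hnat [_ [Hreg _]]].
  pose (Wc := fun k => get_wit _ _ (Hcx k)).
  pose (Wd := fun k => get_wit _ _ (Hdy k)).
  pose (IX := {k : Ic & projT1 (Wc k)}).
  pose (IY := {k : Id & projT1 (Wd k)}).
  pose (xX := fun p : IX => proj1_sig (projT2 (Wc (projT1 p))) (projT2 p)).
  pose (yY := fun p : IY => proj1_sig (projT2 (Wd (projT1 p))) (projT2 p)).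
  assert (HIX : lt_card IX K).
  { apply Hreg; auto. intro k. exact (proj1 (proj2_sig (projT2 (Wc k)))). }
  assert (HIY : lt_card IY K).
  { apply Hreg; auto. intro k. exact (proj1 (proj2_sig (projT2 (Wd k)))). }
  assert (HxX : forall p, in_X X (xX p)).
  { intro p. exact (proj1 (proj2 (proj2_sig (projT2 (Wc (projT1 p))))) (projT2 p)). }
  assert (HyY : forall p, in_X Y (yY p)).
  { intro p. exact (proj1 (proj2 (proj2_sig (projT2 (Wd (projT1 p))))) (projT2 p)). }
  assert (Hrefl : forall (Z : HDef) (s : M -> M) h, hyperdef0 Z -> is_aut s -> in_X Z h ->
            heq (act s h) (act s h)).
  { intros Z s h [_ [Hc0 [Hrf _]]] Hs' [Hrel HZ]. split; [reflexivity|]. simpl.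
    rewrite Hrel. apply (rel0_aut _ _ Hs' Hc0). apply Hrf; auto. }
  destruct (Horth IX IY xX yY HIX HIY HxX HyY (fun p => act sig (xX p)) (fun p => act tau (yY p)))
    as [rho [Hr [_ Hj]]].
  - exists sig. split; auto. split; [intros []|]. intro i; apply (Hrefl X); auto.
  - exists tau. split; auto. split; [intros []|]. intro i; apply (Hrefl Y); auto.
  - exists rho; split; auto. split.
    + intro k. apply heq_trans with (act sig (c k)).
      * exact (proj2 (proj1 (Hcx k))).
      * apply (helper _ HXd _ _ Hr Hs _ (proj1_sig (projT2 (Wc k)))).
        -- exact (proj1 (proj2 (proj2_sig (projT2 (Wc k))))).
        -- exact (proj1 (Hcx k)).
        -- exact (proj2 (proj2 (proj2_sig (projT2 (Wc k))))).
        -- intro i. exact (Hj (inl (existT _ k i))).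
      * apply Hsc.
    + intro k. apply heq_trans with (act tau (d k)).
      * exact (proj2 (proj1 (Hdy k))).
      * apply (helper _ HYd _ _ Hr Ht _ (proj1_sig (projT2 (Wd k)))).
        -- exact (proj1 (proj2 (proj2_sig (projT2 (Wd k))))).
        -- exact (proj1 (Hdy k)).
        -- exact (proj2 (proj2 (proj2_sig (projT2 (Wd k))))).
        -- intro i. exact (Hj (inr (existT _ k i))).
      * apply Htd.
Qed.

End S.

Theorem mainTheorem3 (L : Language) (M : Structure L) (K : Type)
  (HM : @monster L M K)
  (X Y : @HDef L M) (HX : hyperdef0 X) (HY : hyperdef0 Y)
  (Horth : orth K empty_tuple (in_X X) (in_X Y))
  (A : @HTuple L M) (HAsmall : lt_card (idx A) K)
  (HA : forall i, heq_of K X (elt A i) \/ heq_of K Y (elt A i))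
  (X' Y' : @Himag L M -> Prop)
  (HX'sub : forall h, X' h -> heq_of K X h)
  (HY'sub : forall h, Y' h -> heq_of K Y h)
  (HX'def : hyperdef_over K A X') (HY'def : hyperdef_over K A Y') :
  orth K A X' Y'.
Proof.
  intros I J a b HI HJ Ha Hb a' b' [sig [Hs [HsA Hsa]]] [tau [Ht [HtA Htb]]].
  pose proof HM as [Hnat [_ [Hreg _]]].
  pose (AX := {i : idx A | heq_of K X (elt A i)}).
  pose (AY := {i : idx A | heq_of K Y (elt A i)}).
  pose (ax := fun i : AX => elt A (proj1_sig i)).
  pose (ay := fun i : AY => elt A (proj1_sig i)).
  assert (H1 : lt_card (I + AX) K) by (apply lt_card_sum; auto; apply lt_card_sub; auto).
  assert (H2 : lt_card (J + AY) K) by (apply lt_card_sum; auto; apply lt_card_sub; auto).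
  assert (H3 : forall k, heq_of K X (join a ax k)) by (intros [i|[i hi]]; simpl; auto).
  assert (H4 : forall k, heq_of K Y (join b ay k)) by (intros [i|[i hi]]; simpl; auto).
  assert (H5 : forall k, heq (act sig (join a ax k)) (join a' ax k))
    by (intros [i|[i hi]]; simpl; auto; apply HsA).
  assert (H6 : forall k, heq (act tau (join b ay k)) (join b' ay k))
    by (intros [i|[i hi]]; simpl; auto; apply HtA).
  destruct (orth_heq K HM X Y HX HY Horth _ _ (join a ax) (join a' ax)
              (join b ay) (join b' ay) H1 H2 H3 H4 sig tau Hs Ht H5 H6)
    as [rho [Hr [Hc Hd]]].
  exists rho. split; auto. split.
    + intro i. destruct (HA i) as [h|h].
      * exact (Hc (inr (exist _ i h))).
      * exact (Hd (inr (exist _ i h))).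
    + intros [i|j]; simpl.
      * exact (Hc (inl i)).
      * exact (Hd (inl j)).
Qed.
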